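(* Let $C$ be an $(n,k)$-code and $0\le d\le n-k$. Then $C$ is $\operatorname{rLD-MDS}_d(1)$ if and only if $C^\perp$ is $\operatorname{rMDS}_d(2)$.
   Context: $C$ is $(\rho,L)$ average-radius list-decodable if for every $y\in\mathbb F^n$ and every $L+1$ distinct codewords $c_0,\dots,c_L$, $\frac1{L+1}\sum_i\operatorname{wt}(y-c_i)>\rho n$. $C$ is $\operatorname{rLD-MDS}_d(L)$ if this holds with $\rho=\frac{L}{L+1}\frac{n-k-d}{n}$. For a $k'\times n$ matrix $V$ and $A_1,\dots,A_\ell\subseteq[n]$, $\mathcal G_{A_1,\dots,A_\ell}[V]$ is the block matrix whose $i$-th block row has $I_{k'}$ in the first block column and $V|_{A_i}$ (columns of $V$ in $A_i$) in block column $i+1$, zeros elsewhere. An $(n,k')$-code with generator matrix $V$ is $\operatorname{rMDS}_d(\ell)$ ($0\le d\le k'$) if $\mathcal G_{A_1,\dots,A_\ell}[V]$ has full column rank whenever $\mathcal G_{A_1,\dots,A_\ell}[W]$ has full column rank, $W$ a generic $(k'-d)\times n$ matrix (independent indeterminate entries). *)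

(* Defs.v *)
From HB Require Import structures.
From mathcomp Require Import all_boot all_order all_algebra.
From mathcomp Require Import fraction mpoly.
Set Implicit Arguments. Unset Strict Implicit. Unset Printing Implicit Defensive.
Import Order.TTheory GRing.Theory Num.Theory.
Local Open Scope ring_scope.

(* ---------- Codes ----------
   A linear (n,k)-code over a field F is represented by a generator matrix
   G : 'M[F]_(k,n) with linearly independent rows (row_free G); the code is
   the row space of G: c is a codeword iff (c <= G)%MS. *)

Definition codeword (F : fieldType) (k n : nat) (G : 'M[F]_(k, n)) (c : 'rV[F]_n) : Prop :=
  (c <= G)%MS.

Definition wt (F : fieldType) (n : nat) (v : 'rV[F]_n) : nat :=
  #|[set i : 'I_n | v 0 i != 0]|.

Definition avg_radius_LD (F : fieldType) (k n : nat) (G : 'M[F]_(k, n))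
    (rho : rat) (L : nat) : Prop :=
  forall (y : 'rV[F]_n) (c : 'I_(L.+1) -> 'rV[F]_n),
    injective c -> (forall i, codeword G (c i)) ->
    rho * n%:R < (\sum_(i < L.+1) wt (y - c i))%:R / (L.+1)%:R.

Definition rLD_MDS (F : fieldType) (k n : nat) (G : 'M[F]_(k, n)) (d L : nat) : Prop :=
  avg_radius_LD G ((L%:R / (L.+1)%:R) * ((n - k - d)%N%:R / n%:R) : rat) L.

(* ---------- The block matrix G_{A_1..A_l}[V] ----------
   Block rows indexed by i < l (each of height m), block columns by j < l.+1:
   block column 0 has width m, block column (lift ord0 i) has width #|A i|. *)

Definition blk_w (n m l : nat) (A : 'I_l -> {set 'I_n}) (j : 'I_l.+1) : nat :=
  if unlift ord0 j is Some i then #|A i| else m.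

Definition restr_cols (R : Type) (m n : nat) (V : 'M[R]_(m, n)) (A : {set 'I_n})
  : 'M[R]_(m, #|A|) := \matrix_(r, c) V r (enum_val c).

Definition blk (R : pzRingType) (m n l : nat) (V : 'M[R]_(m, n))
    (A : 'I_l -> {set 'I_n}) (i : 'I_l) (j : 'I_l.+1) : 'M[R]_(m, blk_w m A j) :=
  match unlift ord0 j as o
        return 'M[R]_(m, if o is Some i' then #|A i'| else m) with
  | None => 1%:M
  | Some i' => if i' == i then restr_cols V (A i') else 0
  end.

Definition GA (R : pzRingType) (m n l : nat) (V : 'M[R]_(m, n))
    (A : 'I_l -> {set 'I_n}) :
    'M[R]_(\sum_(i < l) m, \sum_(j < l.+1) blk_w m A j) :=
  \mxblock_(i < l, j < l.+1) blk V A i j.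

Definition full_col_rank (K : fieldType) (r c : nat) (M : 'M[K]_(r, c)) : Prop :=
  \rank M = c.

(* generic m x n matrix: independent indeterminates, viewed in the field of
   rational functions over F in m*n variables *)
Definition generic_mx (F : fieldType) (m n : nat) :
    'M[{fraction {mpoly F[m * n]}}]_(m, n) :=
  \matrix_(i, j) (FracField.tofrac ('X_(mxvec_index i j) : {mpoly F[m * n]})).

Definition rMDS (F : fieldType) (k' n : nat) (V : 'M[F]_(k', n)) (d l : nat) : Prop :=
  forall A : 'I_l -> {set 'I_n},
    full_col_rank (GA (generic_mx F (k' - d) n) A) ->
    full_col_rank (GA V A).

(* Main.v *)
Require Import Defs.
From HB Require Import structures.
From mathcomp Require Import all_boot all_order all_algebra.
From mathcomp Require Import fraction mpoly lra.
Set Implicit Arguments. Unset Strict Implicit. Unset Printing Implicit Defensive.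
Import Order.TTheory GRing.Theory Num.Theory.
Local Open Scope ring_scope.


Section Ext.
Variables (K : fieldType) (n : nat).

Definition ext (S : {set 'I_n}) (y : 'cV[K]_#|S|) : 'rV[K]_n :=
  \row_j \sum_c (enum_val c == j)%:R * y c 0.
Definition restr (S : {set 'I_n}) (z : 'rV[K]_n) : 'cV[K]_#|S| :=
  \col_c z 0 (enum_val c).
Definition suppd (z : 'rV[K]_n) (S : {set 'I_n}) := forall j, j \notin S -> z 0 j = 0.
Definition indep m (V : 'M[K]_(m, n)) (S : {set 'I_n}) :=
  forall z : 'rV[K]_n, suppd z S -> V *m z^T = 0 -> z = 0.

Lemma restr_ext S y : restr S (ext y) = y.
Proof.
apply/matrixP => c i; rewrite !mxE (ord1 i) (bigD1 c) //= eqxx mul1r big1 ?addr0 //.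
move=> c' ne; rewrite (inj_eq enum_val_inj) (negbTE ne) mul0r //.
Qed.

Lemma ext_supp S y : suppd (@ext S y) S.
Proof.
move=> j hj; rewrite mxE big1 // => c _.
have : enum_val c \in S := enum_valP c.
by case: eqP => [->|]; rewrite ?(negbTE hj) // mul0r.
Qed.

Lemma ext0 S : @ext S 0 = 0.
Proof. by apply/matrixP => i j; rewrite !mxE big1 // => c _; rewrite mxE mulr0. Qed.

Lemma ext_restr S z : suppd z S -> ext (restr S z) = z.
Proof.
move=> hz; apply/matrixP => i j; rewrite (ord1 i).
case: (boolP (j \in S)) => hj; last by rewrite (ext_supp _ hj) hz.
rewrite mxE (bigD1 (enum_rank_in hj j)) //= enum_rankK_in // eqxx mul1r mxE.
rewrite enum_rankK_in // big1 ?addr0 // => c ne.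
case: eqP => [e|]; last by rewrite mul0r.
by case/negP: ne; apply/eqP; apply: enum_val_inj; rewrite e enum_rankK_in.
Qed.

Lemma mul_ext m (V : 'M[K]_(m, n)) S y : V *m (@ext S y)^T = restr_cols V S *m y.
Proof.
apply/matrixP => r i; rewrite (ord1 i) !mxE.
under eq_bigr do rewrite !mxE big_distrr /=.
rewrite exchange_big /=; apply: eq_bigr => c _; rewrite !mxE.
rewrite (bigD1 (enum_val c)) //= eqxx mul1r big1 ?addr0 // => j ne.
by rewrite eq_sym (negbTE ne) mul0r mulr0.
Qed.

Lemma mul_restr m (V : 'M[K]_(m, n)) S z : suppd z S ->
  restr_cols V S *m restr S z = V *m z^T.
Proof. by move=> hz; rewrite -mul_ext ext_restr. Qed.

End Ext.

Definition kerP (K : fieldType) r c (M : 'M[K]_(r, c)) :=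
  forall u : 'cV_c, M *m u = 0 -> u = 0.

Lemma fcrP (K : fieldType) r c (M : 'M[K]_(r, c)) : full_col_rank M <-> kerP M.
Proof.
rewrite /full_col_rank -mxrank_tr; split.
  move=> h u hu; have rf : row_free M^T by rewrite /row_free h.
  apply: trmx_inj; rewrite trmx0; apply: (row_free_inj rf) => /=.
  by rewrite mul0mx -trmx_mul hu trmx0.
move=> h; apply/eqP; change (row_free M^T); rewrite -kermx_eq0; apply/eqP/row_matrixP => i.
rewrite row0; apply: trmx_inj; rewrite trmx0; apply: h.
have /sub_kermxP e := row_sub i (kermx M^T).
by apply: trmx_inj; rewrite trmx_mul trmxK e !trmx0.
Qed.


Section GAsec.
Variables (K : fieldType) (m n l : nat) (V : 'M[K]_(m, n)) (A : 'I_l -> {set 'I_n}).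

Lemma blk_wS i : blk_w m A (lift ord0 i) = #|A i|.
Proof. by rewrite /blk_w liftK. Qed.

Lemma blk_w0 : blk_w m A ord0 = m.
Proof. by rewrite /blk_w unlift_none. Qed.

Lemma blk_mul_gen0 i j (E : unlift ord0 j = None) (e : blk_w m A j = m)
  (D : 'cV[K]_(blk_w m A j)) :
  blk V A i j *m D = castmx (e, erefl 1%N) D.
Proof.
move: e D; rewrite /blk /blk_w; rewrite E => e D /=.
by rewrite castmx_id mul1mx.
Qed.

Lemma blk_mul0 i (D : 'cV[K]_(blk_w m A ord0)) :
  blk V A i ord0 *m D = castmx (blk_w0, erefl 1%N) D.
Proof. exact: blk_mul_gen0 (unlift_none _) _ _. Qed.

Lemma blk_mul_gen i j i' (E : unlift ord0 j = Some i') (e : blk_w m A j = #|A i'|)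
  (D : 'cV[K]_(blk_w m A j)) :
  blk V A i j *m D = if i' == i then restr_cols V (A i') *m castmx (e, erefl 1%N) D else 0.
Proof.
move: e D; rewrite /blk /blk_w; rewrite E => e D /=.
rewrite castmx_id; case: eqP => _ //; exact: mul0mx.
Qed.

Lemma blk_mulS i i' (D : 'cV[K]_(blk_w m A (lift ord0 i'))) :
  blk V A i (lift ord0 i') *m D =
  if i' == i then restr_cols V (A i') *m castmx (blk_wS i', erefl 1%N) D else 0.
Proof. exact: blk_mul_gen (liftK _ _) _ _. Qed.

Lemma GA_mul (D : forall j, 'cV[K]_(blk_w m A j)) :
  GA V A *m \mxcol_j D j =
  \mxcol_i (castmx (blk_w0, erefl 1%N) (D ord0) + restr_cols V (A i) *m castmx (blk_wS i, erefl 1%N) (D (lift ord0 i))).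
Proof.
rewrite /GA mul_mxblock_mxrow; apply: eq_mxcol => i.
rewrite big_ord_recl blk_mul0; congr (_ + _).
rewrite (bigD1 i) //= blk_mulS eqxx big1 ?addr0 // => i'' ne.
by rewrite blk_mulS (negbTE ne).
Qed.

Definition mkD (x : 'cV[K]_m) (y : forall i, 'cV[K]_#|A i|) j : 'cV[K]_(blk_w m A j) :=
  match unlift ord0 j as o return 'cV[K]_(if o is Some i then #|A i| else m) with
  | None => x
  | Some i => y i
  end.

Lemma mkD_gen x y j i' (E : unlift ord0 j = Some i') (e : blk_w m A j = #|A i'|) :
  castmx (e, erefl 1%N) (mkD x y j) = y i'.
Proof. move: e; rewrite /mkD /blk_w; rewrite E => e /=; exact: castmx_id. Qed.

Lemma mkD_gen0 x y j (E : unlift ord0 j = None) (e : blk_w m A j = m) :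
  castmx (e, erefl 1%N) (mkD x y j) = x.
Proof. move: e; rewrite /mkD /blk_w; rewrite E => e /=; exact: castmx_id. Qed.

Lemma mkD_0 x y : castmx (blk_w0, erefl 1%N) (mkD x y ord0) = x.
Proof. exact: mkD_gen0 (unlift_none _) _. Qed.

Lemma mkD_lift x y i : castmx (blk_wS i, erefl 1%N) (mkD x y (lift ord0 i)) = y i.
Proof. exact: mkD_gen (liftK _ _) _. Qed.

Lemma castmx0 p q p' q' (e : (p = p') * (q = q')) : castmx e (0 : 'M[K]_(p, q)) = 0.
Proof. by apply/matrixP => a b; rewrite castmxE !mxE. Qed.

Lemma mxcol_eq0 (D : forall j, 'cV[K]_(blk_w m A j)) j : \mxcol_j D j = 0 -> D j = 0.
Proof. by move=> h; rewrite -(mxcolK D j) h submxcol0. Qed.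

Lemma mxcol_eq0' (D : forall i : 'I_l, 'cV[K]_m) i : \mxcol_j D j = 0 -> D i = 0.
Proof. by move=> h; rewrite -(mxcolK D i) h submxcol0. Qed.

Lemma GA_kerP : kerP (GA V A) <->
  (forall (x : 'cV[K]_m) (y : forall i, 'cV[K]_#|A i|),
     (forall i, x + restr_cols V (A i) *m y i = 0) -> x = 0 /\ forall i, y i = 0).
Proof.
split.
  move=> h x y hxy.
  have h0 : \mxcol_j mkD x y j = 0.
    apply: h; rewrite GA_mul.
    rewrite -(mxcol0 (p_ := fun _ : 'I_l => m)); apply: eq_mxcol => i.
    by rewrite mkD_lift mkD_0; exact: hxy.
  split; first by rewrite -(mkD_0 x y) (mxcol_eq0 ord0 h0) castmx0.
  by move=> i; rewrite -(mkD_lift x y i) (mxcol_eq0 (lift ord0 i) h0) castmx0.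
move=> h u hu.
rewrite -(submxcolK u) in hu *.
set D := fun j => submxcol u j.
move: hu; rewrite GA_mul => hu.
have [hx hy] := h (castmx (blk_w0, erefl 1%N) (D ord0)) (fun i => castmx (blk_wS i, erefl 1%N) (D (lift ord0 i)))
   (fun i => mxcol_eq0' i hu).
rewrite -(mxcol0 (p_ := blk_w m A)); apply: eq_mxcol => j.
case: (unliftP ord0 j) => [i ->|->].
  2: move/(congr1 (castmx (esym blk_w0, esym (erefl 1%N)))): hx.
  2: by rewrite castmxK castmx0.
have := hy i; move/(congr1 (castmx (esym (blk_wS i), esym (erefl 1%N)))).
by rewrite castmxK castmx0.
Qed.

End GAsec.


Lemma GA_card (K : fieldType) m n l (V : 'M[K]_(m, n)) (A : 'I_l -> {set 'I_n}) :
  full_col_rank (GA V A) -> (m + \sum_i #|A i| <= \sum_(i < l) m)%N.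
Proof.
move=> h; have := rank_leq_row (GA V A); rewrite h.
rewrite big_ord_recl blk_w0.
by rewrite (eq_bigr (fun i => #|A i|)) // => i _; rewrite blk_wS.
Qed.

Lemma ord2_cases (t : 'I_2) : t = ord0 \/ t = ord_max.
Proof. by case: t => [[|[|]]] //= ?; [left|right]; apply: val_inj. Qed.

Lemma GA_disj (K : fieldType) m n (V : 'M[K]_(m, n)) (A : 'I_2 -> {set 'I_n}) :
  kerP (GA V A) -> A ord0 :&: A ord_max = set0.
Proof.
move=> /GA_kerP h; apply/setP => j; rewrite inE in_set0; apply/negP => /andP [h0 h1].
pose e : 'rV[K]_n := delta_mx 0 j.
have hA : forall t, j \in A t by move=> t; case: (ord2_cases t) => ->.
have se : forall t, suppd e (A t).
  move=> t j' hj'; rewrite mxE eqxx /=; case: eqP => [ej|//].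
  by move: hj'; rewrite ej hA.
have hh : forall t, - (V *m e^T) + restr_cols V (A t) *m restr (A t) e = 0.
  by move=> t; rewrite mul_restr // addNr.
have [_ hy] := h _ _ hh.
have := ext_restr (se ord0); rewrite hy ext0 => /(congr1 (fun M : 'rV[K]_n => M 0 j)).
by rewrite !mxE !eqxx /= => /eqP; rewrite eq_sym ?mulr1n oner_eq0.
Qed.

Lemma GA_full2 (K : fieldType) m n (V : 'M[K]_(m, n)) (A : 'I_2 -> {set 'I_n}) :
  A ord0 :&: A ord_max = set0 -> indep V (A ord0 :|: A ord_max) -> kerP (GA V A).
Proof.
move=> hd hi; apply/GA_kerP => x y hxy.
pose z := ext (y ord0) - ext (y ord_max).
have hz : z = 0.
  apply: hi.
    move=> j; rewrite inE negb_or => /andP [j0 j1].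
    have ha := ext_supp (y ord0) j0; have hb := ext_supp (y ord_max) j1.
    have -> : z 0 j = (ext (y ord0)) 0 j - (ext (y ord_max)) 0 j by rewrite /z !mxE.
    by rewrite ha hb subr0.
  rewrite /z linearB /= mulmxBr !mul_ext.
  have e0 := hxy ord0; have e1 := hxy ord_max.
  rewrite -[_ *m y ord0](addKr x) e0 -[_ *m y ord_max](addKr x) e1 subrr //.
have hy0 : ext (y ord0) = 0.
  apply/matrixP => i j; rewrite (ord1 i) [RHS]mxE.
  case: (boolP (j \in A ord0)) => hj; last by rewrite ext_supp.
  have hj1 : j \notin A ord_max.
    apply/negP => hj1; have : j \in A ord0 :&: A ord_max by rewrite inE hj hj1.
    by rewrite hd inE.
  have := congr1 (fun M : 'rV[K]_n => M 0 j) hz.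
  have -> : z 0 j = (ext (y ord0)) 0 j - (ext (y ord_max)) 0 j by rewrite /z !mxE.
  by rewrite (ext_supp _ hj1) subr0 => ->; rewrite mxE.
have hy1 : ext (y ord_max) = 0.
  by move: hz; rewrite /z hy0 sub0r => /eqP; rewrite oppr_eq0 => /eqP.
have Y0 : y ord0 = 0 by rewrite -(restr_ext (y ord0)) hy0 /restr; apply/matrixP => a b; rewrite !mxE.
have Y1 : y ord_max = 0 by rewrite -(restr_ext (y ord_max)) hy1; apply/matrixP => a b; rewrite !mxE.
split.
  by have := hxy ord0; rewrite Y0 mulmx0 addr0.
by move=> t; case: (ord2_cases t) => ->.
Qed.

Lemma GA_indep0 (K : fieldType) m n (V : 'M[K]_(m, n)) (A : 'I_2 -> {set 'I_n}) :
  kerP (GA V A) -> indep V (A ord0).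
Proof.
move=> /GA_kerP h z hs hz.
pose y := fun t : 'I_2 => if t == ord0 as b return 'cV[K]_#|A t| then restr (A t) z else 0.
have hh : forall t, 0 + restr_cols V (A t) *m y t = 0.
  move=> t; rewrite add0r /y; case: eqP => [->|_]; last exact: mulmx0.
  by rewrite mul_restr.
have [_ hy] := h _ _ hh.
by rewrite -(ext_restr hs); have := hy ord0; rewrite /y eqxx => ->; rewrite ext0.
Qed.


Lemma generic_indep (F : fieldType) m n (S : {set 'I_n}) :
  (#|S| <= m)%N -> indep (generic_mx F m n) S.
Proof.
move=> hs z hz hW.
set W := generic_mx F m n.
have hy : restr_cols W S *m restr S z = 0 by rewrite mul_restr.
pose P : 'M[{mpoly F[m * n]}]_#|S| :=
  \matrix_(r, c) 'X_(mxvec_index (widen_ord hs r) (enum_val c)).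
pose M := map_mx (@tofrac _) P.
have hM : M *m restr S z = 0.
  apply/matrixP => r i; move/matrixP: hy => /(_ (widen_ord hs r) i).
  by rewrite !mxE => h; rewrite -[X in _ = X]h; apply: eq_bigr => c _; rewrite !mxE.
pose E : 'M[F]_(m, n) := \matrix_(i, j)
  \sum_(c : 'I_#|S|) ((enum_val c == j) && (i == c :> nat))%:R.
pose v := fun t => mxvec E 0 t.
have hP : map_mx (meval v) P = 1%:M.
  apply/matrixP => r c; rewrite !mxE mevalXU /v mxvecE mxE.
  rewrite (bigD1 c) //= eqxx /= big1 ?addr0.
    by [].
  move=> c' ne; rewrite (inj_eq enum_val_inj) (negbTE ne) //.
have hdet : \det P != 0.
  apply/eqP => h0; have := det_map_mx (meval v) P.
  by rewrite hP det1 h0 rmorph0 => /eqP; rewrite oner_eq0.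
have uM : M \in unitmx.
  by rewrite unitmxE unitfE det_map_mx tofrac_eq0.
have y0 : restr S z = 0 by rewrite -(mulKmx uM (restr S z)) hM mulmx0.
by rewrite -(ext_restr hz) y0 ext0.
Qed.


Lemma rat_ineq (a b n : nat) : n != 0%N ->
  ((1%:R / 2%:R * (a%:R / n%:R)) * n%:R < b%:R / 2%:R :> rat) = (a < b)%N.
Proof.
move=> n0; rewrite -mulrA mulfVK ?pnatr_eq0 // mul1r -(ltr_nat rat).
apply/idP/idP => h; lra.
Qed.

Section Wt.
Variables (K : fieldType) (n : nat).

Lemma wt_supp (z : 'rV[K]_n) S : suppd z S -> (wt z <= #|S|)%N.
Proof.
move=> hz; apply: subset_leq_card; apply/subsetP => i; rewrite inE.
by apply: contraR => hi; rewrite hz.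
Qed.

Lemma supp_wt (z : 'rV[K]_n) : suppd z [set i | z 0 i != 0].
Proof. by move=> j; rewrite inE negbK => /eqP. Qed.

Lemma wt0 : wt (0 : 'rV[K]_n) = 0%N.
Proof.
rewrite /wt; have -> : [set i : 'I_n | (0 : 'rV[K]_n) 0 i != 0] = set0.
  by apply/setP => i; rewrite !inE mxE eqxx.
by rewrite cards0.
Qed.

Lemma wtN (z : 'rV[K]_n) : wt (- z) = wt z.
Proof. by rewrite /wt; apply: eq_card => i; rewrite !inE mxE oppr_eq0. Qed.

Lemma wt_tri (y c0 c1 : 'rV[K]_n) : (wt (c1 - c0) <= wt (y - c0) + wt (y - c1))%N.
Proof.
apply: leq_trans (leq_card_setU _ _).1.
apply: subset_leq_card; apply/subsetP => i; rewrite !inE !mxE.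
apply: contraR; rewrite negb_or !negbK => /andP [/eqP h0 /eqP h1].
by apply/eqP; rewrite -(subr0_eq h0) -(subr0_eq h1) subrr.
Qed.

Lemma n_pos (a b : 'rV[K]_n) : a != b -> n != 0%N.
Proof.
apply: contraNneq => n0; apply/eqP/matrixP => i j.
by have := ltn_ord j; rewrite {2}n0.
Qed.

End Wt.

Lemma ord2_ne : (lift ord0 ord0 : 'I_2) != ord0. Proof. by []. Qed.

Unset Implicit Arguments.
Theorem corollary3p10 (F : fieldType) (n k d : nat)
  (G : 'M[F]_(k, n)) (H : 'M[F]_(n - k, n)) :
  row_free G ->
  row_free H ->
  (forall u : 'rV[F]_n, (u <= H)%MS <-> u *m G^T = 0) ->
  (d <= n - k)%N ->
  (rLD_MDS G d 1 <-> rMDS H d 2).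
Proof.
move=> rfG rfH hHG hd.
have HGt : H *m G^T = 0.
  apply/row_matrixP => i; rewrite row_mul row0; apply/(hHG _).1; exact: row_sub.
have C1 : forall c : 'rV_n, (c <= G)%MS -> H *m c^T = 0.
  by move=> c /submxP [w ->]; rewrite trmx_mul mulmxA HGt mul0mx.
have C2 : forall c : 'rV_n, H *m c^T = 0 -> (c <= G)%MS.
  move=> c hc.
  have h1 : (c <= kermx H^T)%MS.
    by apply/sub_kermxP; apply: trmx_inj; rewrite trmx_mul trmxK hc !trmx0.
  have h2 : (G <= kermx H^T)%MS.
    by apply/sub_kermxP; apply: trmx_inj; rewrite trmx_mul trmxK HGt !trmx0.
  have rG : \rank G = k by apply/eqP.
  have kn : (k <= n)%N by rewrite -rG rank_leq_col.
  have rk : \rank (kermx H^T) = k.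
    by rewrite mxrank_ker mxrank_tr (eqP rfH) subKn.
  have [_ e] := mxrank_leqif_sup h2.
  have h3 : (kermx H^T <= G)%MS by rewrite -e rG rk.
  exact: submx_trans h1 h3.
pose Good := forall c : 'rV[F]_n, (c <= G)%MS -> c != 0 -> (n - k - d < wt c)%N.
have e2 : lift ord0 ord0 = ord_max :> 'I_2 by apply: val_inj.
have L1 : rLD_MDS G d 1 -> Good.
  move=> hL c hc nc.
  have n0 := n_pos nc.
  pose cc : 'I_2 -> 'rV[F]_n := fun i => if i == ord0 then 0 else c.
  have ic : injective cc.
    move=> i j; case: (ord2_cases i) => ->; case: (ord2_cases j) => -> //=;
      rewrite /cc /= => h; [move: nc; rewrite -h eqxx | move: nc; rewrite h eqxx] => //.
  have hcw : forall i, codeword G (cc i).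
    by move=> i; rewrite /codeword /cc; case: eqP => _ //; exact: sub0mx.
  have := hL 0 cc ic hcw.
  rewrite big_ord_recl big_ord1 /cc eqxx (negbTE ord2_ne) !sub0r oppr0 wt0 wtN add0n.
  by rewrite rat_ineq.
have L2 : Good -> rLD_MDS G d 1.
  move=> hG y c ic hc.
  have ne : c ord0 != c (lift ord0 ord0).
    by apply/negP => /eqP /ic h; move: ord2_ne; rewrite -h eqxx.
  rewrite big_ord_recl big_ord1 rat_ineq; last exact: n_pos ne.
  apply: leq_trans (wt_tri y (c ord0) (c (lift ord0 ord0))).
  apply: hG; first by apply: addmx_sub; [exact: hc | rewrite eqmx_opp; exact: hc].
  by rewrite subr_eq0 eq_sym.
have R1 : rMDS H d 2 -> Good.
  move=> hR c hc nc; rewrite ltnNge; apply/negP => hw.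
  pose S := [set i | c 0 i != 0].
  pose A : 'I_2 -> {set 'I_n} := fun i => if i == ord0 then S else set0.
  have hA0 : A ord0 = S by rewrite /A eqxx.
  have hA1 : A ord_max = set0 by rewrite /A.
  have hfW : full_col_rank (GA (generic_mx F (n - k - d) n) A).
    apply/fcrP; apply: GA_full2; first by rewrite hA1 setI0.
    by rewrite hA0 hA1 setU0; apply: generic_indep.
  have := hR A hfW => /fcrP /GA_indep0; rewrite hA0 => hi.
  by move: nc; rewrite (hi c (@supp_wt _ _ c) (C1 c hc)) eqxx.
have R2 : Good -> rMDS H d 2.
  move=> hG A hW.
  have hcard := GA_card hW.
  rewrite !big_ord_recl !big_ord0 e2 !addn0 leq_add2l in hcard.
  have hdisj := GA_disj ((fcrP _).1 hW).
  apply/fcrP; refine (GA_full2 hdisj _).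
  move=> z hz hHz; apply/eqP; apply: contraT => nz.
  have := hG z (C2 z hHz) nz; rewrite ltnNge => /negP h; exfalso; apply: h.
  apply: leq_trans (wt_supp hz) _.
  by rewrite cardsU hdisj cards0 subn0.
split=> h.
  exact: R2 (L1 h).
exact: L2 (R1 h).
Qed.
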